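(* Let $t \in T$ with $t \geq 10^6$. If $C_3(t) = 5$, then $P(t) \geq 2$.
   Context: For positive integers $m, r$, $C_m(r)$ is the minimum odd positive integer $n$ such that there exist vectors $v_1, \ldots, v_n \in \mathbb{Z}^m$ (not necessarily distinct) with $|v_i| = \sqrt{r}$ (Euclidean norm) for every $i$ and $v_1 + \cdots + v_n = \mathbf{0}$; if no such odd $n$ exists, $C_m(r) = 0$. $T$ is the set of positive integers $t \equiv 2 \pmod 4$ whose square-free part has at least one odd prime factor $p$ with $p \equiv 2 \pmod 3$. For a positive integer $z$, $P(z)$ is the number of integer triples $(a,b,c)$ with $0 \leq a \leq b \leq c$ and $a^2 + b^2 + c^2 = z$. *)

(* Defs.v *)
From mathcomp Require Import all_boot all_order all_algebra.
From mathcomp Require Import ssrint.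
From Stdlib Require Import ClassicalEpsilon.
Set Implicit Arguments. Unset Strict Implicit. Unset Printing Implicit Defensive.
Import GRing.Theory Num.Theory.

Definition balanced (m r n : nat) : Prop :=
  exists v : 'I_n -> 'I_m -> int,
    (forall i, (\sum_(j < m) (v i j) ^+ 2)%R = Posz r) /\
    (forall j, (\sum_(i < n) v i j)%R = 0%R).

Definition odd_balanced (m r n : nat) : bool :=
  odd n && (if excluded_middle_informative (balanced m r n) then true else false).

Definition C (m r : nat) : nat :=
  match excluded_middle_informative (exists n, odd_balanced m r n) with
  | left H => ex_minn H
  | right _ => 0
  end.

Definition sqfree_part (t : nat) : nat :=
  \prod_(p <- primes t | odd (logn p t)) p.

Definition inT (t : nat) : Prop :=
  0 < t /\ t %% 4 = 2 /\
  exists p, [/\ prime p, odd p, p %| sqfree_part t & p %% 3 = 2].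

Definition P (z : nat) : nat :=
  \sum_(a < z.+1) \sum_(b < z.+1) \sum_(c < z.+1)
     ((a <= b) && (b <= c) && (a ^ 2 + b ^ 2 + c ^ 2 == z)).

(* Main.v *)
Require Import Defs.
From mathcomp Require Import all_boot all_order all_algebra.
From Stdlib Require Import Classical_Prop ClassicalEpsilon.
From mathcomp Require Import zify ring lra.
Import Order.TTheory GRing.Theory Num.Theory.
Set Implicit Arguments. Unset Strict Implicit. Unset Printing Implicit Defensive.
Local Open Scope ring_scope.

Lemma int_round (a m : int) (k : nat) : 0 < m -> m <= 2 * k%:Z + 1 ->
  exists q a' : int, a = q * m + a' /\ - k%:Z <= a' /\ a' <= k%:Z.
Proof.
move=> m0 mk.
have m0' : m != 0 by rewrite gt_eqF.
move: (divz_eq (a + k%:Z) m) (modz_ge0 (a + k%:Z) m0') (ltz_pmod (a + k%:Z) m0).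
set q := ((a + k%:Z) %/ m)%Z; set r := ((a + k%:Z) %% m)%Z => e r0 rm.
exists q, (r - k%:Z); split; first by lia.
split; lia.
Qed.

Lemma prime_not_sq (p : nat) (x : int) : prime p -> x ^+ 2 <> p%:Z.
Proof.
move=> pp e.
have ex : (`|x|%N * `|x|%N = p)%N.
  have : (`|x|%N%:Z * `|x|%N%:Z = p%:Z) by rewrite -e !abszE -normrM -expr2 ger0_norm // sqr_ge0.
  lia.
have : (`|x|%N %| p)%N by rewrite -ex dvdn_mulr.
case/primeP: pp => p1 H /H /orP [/eqP h|/eqP h]; nia.
Qed.

Lemma no_div (p m : nat) (N : int) : prime p -> (1 < m < p)%N -> p%:Z = m%:Z * N -> False.
Proof.
move=> pp /andP[m1 mp] e.
have N0 : 0 <= N by nia.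
have e' : (p = m * `|N|%N)%N.
  have : p%:Z = (m * `|N|%N)%N%:Z by rewrite PoszM abszE ger0_norm.
  by case.
case/primeP: pp => p1 /(_ m) H.
have : (m %| p)%N by rewrite e' dvdn_mulr.
move/H => /orP [/eqP h|/eqP h]; lia.
Qed.

Lemma sqb (k x : int) : - k <= x -> x <= k -> x^+2 <= k^+2.
Proof. move=> h1 h2; nia. Qed.

Lemma sq4_ge0 (a b c d : int) : 0 <= a^+2+b^+2+c^+2+d^+2.
Proof. nia. Qed.
Lemma sq4_eq0 (a b c d : int) : a^+2+b^+2+c^+2+d^+2 = 0 -> a = 0 /\ b = 0 /\ c = 0 /\ d = 0.
Proof. move=> h; nia. Qed.
Lemma pos_of_mul (M r : int) : 0 < M -> 0 <= M*r -> 0 <= r.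
Proof. move=> h1 h2; nia. Qed.
Lemma le_of_mul (M r : int) : 0 < M -> M*r <= M*M -> r <= M.
Proof. move=> h1 h2; nia. Qed.
Lemma k2_of (M k : int) : 0 < M -> 0 <= k -> 4*k^+2 <= M*M -> M * M <= 4 * k^+2 -> M = 2*k.
Proof. move=> *; nia. Qed.
Lemma all_eq_k (a b c d k : int) : a^+2 <= k^+2 -> b^+2 <= k^+2 -> c^+2 <= k^+2 -> d^+2 <= k^+2 ->
  a^+2+b^+2+c^+2+d^+2 = 4 * k^+2 -> a^+2 = k^+2 /\ b^+2 = k^+2 /\ c^+2 = k^+2 /\ d^+2 = k^+2.
Proof. move=> *; lia. Qed.
Lemma sg (x k : int) : x^+2 = k^+2 -> exists s, x = s * k /\ s^+2 = 1.
Proof.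
move=> hx.
have : (x - k) * (x + k) = 0 by rewrite -subr_sqr hx subrr.
move/eqP; rewrite mulf_eq0 => /orP [/eqP h|/eqP h].
  by exists 1; split; [lia| rewrite expr1n].
by exists (-1); split; [lia| rewrite sqrrN expr1n].
Qed.

Definition sq4 (a b c d : int) := a^+2+b^+2+c^+2+d^+2.

Lemma descent (p : nat) : prime p -> forall m : nat, (0 < m < p)%N ->
  (exists a b c d : int, sq4 a b c d = (m * p)%N%:Z) ->
  exists a b c d : int, sq4 a b c d = p%:Z.
Proof.
move=> pp m; elim/ltn_ind: m => m IH /andP[m0 mp] [a [b [c [d E]]]].
have [m1|m1] := eqVneq m 1%N.
  by exists a, b, c, d; rewrite E m1 mul1n.
set k := m./2.
have hk : (k.*2 <= m /\ m <= k.*2 + 1)%N.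
  by move: (odd_double_half m); rewrite -/k; case: (odd m) => /= <-; lia.
have mk : m%:Z <= 2 * k%:Z + 1 by lia.
have mpos : 0 < m%:Z by lia.
have [qa [a' [ea [ha1 ha2]]]] := int_round a mpos mk.
have [qb [b' [eb [hb1 hb2]]]] := int_round b mpos mk.
have [qc [c' [ec [hc1 hc2]]]] := int_round c mpos mk.
have [qd [d' [ed [hd1 hd2]]]] := int_round d mpos mk.
subst a b c d.
rewrite /sq4 PoszM in E.
set M := m%:Z in E mpos mk ha1 ha2 hb1 hb2 hc1 hc2 hd1 hd2 *.
set P := p%:Z in E *.
set S' := a'^+2 + b'^+2 + c'^+2 + d'^+2.
set r := P - M * (qa^+2+qb^+2+qc^+2+qd^+2) - 2 * (a'*qa + b'*qb + c'*qc + d'*qd).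
have eS : S' = M * r.
  rewrite /r.
  have -> : forall X Y : int, M * (P - M * X - 2 * Y) = M * P - M * M * X - 2 * M * Y by move=> X Y; ring.
  rewrite -E /S'; ring.
have h4 : 4 * k%:Z^+2 <= M * M by clear -hk; rewrite /M; nia.
have S4 : S' <= 4 * k%:Z^+2.
  have := sqb ha1 ha2; have := sqb hb1 hb2; have := sqb hc1 hc2; have := sqb hd1 hd2.
  rewrite /S'; clear; lia.
have Sle : S' <= M * M by apply: le_trans S4 h4.
have S0 : 0 <= S' by rewrite /S'; apply: sq4_ge0.
have r0 : 0 <= r by apply: (pos_of_mul mpos); rewrite -eS.
have rm : r <= M by apply: (le_of_mul mpos); rewrite -eS.
have P1 : (1 < p)%N by apply: prime_gt1.
have m1' : (1 < m < p)%N by apply/andP; split => //; clear -m0 m1; lia.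
have [r00|rn0] := eqVneq r 0.
  move: eS; rewrite r00 mulr0 /S' => /sq4_eq0 [z1 [z2 [z3 z4]]]; subst a' b' c' d'.
  exfalso; apply: (@no_div p m (qa^+2+qb^+2+qc^+2+qd^+2) pp m1').
  rewrite -/P -/M; apply: (@mulfI _ M); first by rewrite gt_eqF.
  rewrite -E; ring.
have [rM|rnM] := eqVneq r M.
  exfalso.
  have k2 : M = 2 * k%:Z by apply: k2_of => //; rewrite -{2}rM -eS.
  have [ea2 [eb2 [ec2 ed2]]] : a'^+2 = k%:Z^+2 /\ b'^+2 = k%:Z^+2 /\ c'^+2 = k%:Z^+2 /\ d'^+2 = k%:Z^+2.
    apply: all_eq_k; try apply: sqb => //.
    by rewrite -/S' eS rM k2; ring.
  have [sa [ea' sa2]] := sg ea2; subst a'.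
  have [sb [eb' sb2]] := sg eb2; subst b'.
  have [sc [ec' sc2]] := sg ec2; subst c'.
  have [sd [ed' sd2]] := sg ed2; subst d'.
  apply: (@no_div p m (qa^+2+qb^+2+qc^+2+qd^+2 + (qa*sa+qb*sb+qc*sc+qd*sd) + 1) pp m1').
  rewrite -/P -/M.
  apply: (@mulfI _ M); first by rewrite gt_eqF.
  rewrite -E k2.
  have sqe : forall q s : int, (q * (2 * k%:Z) + s * k%:Z) ^+ 2 = 4 * k%:Z^+2 * (q^+2 + q * s) + s^+2 * k%:Z^+2.
    move=> q s; ring.
  rewrite !sqe sa2 sb2 sc2 sd2; ring.
have rpos : 0 < r by rewrite lt_def rn0 r0.
have rlt : r < M by rewrite lt_def eq_sym rnM rm.
set A1 := P - ((qa*M+a')*qa + (qb*M+b')*qb + (qc*M+c')*qc + (qd*M+d')*qd).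
set B1 := (- (qa*M+a')*qb + (qb*M+b')*qa - (qc*M+c')*qd + (qd*M+d')*qc).
set C1 := (- (qa*M+a')*qc + (qb*M+b')*qd + (qc*M+c')*qa - (qd*M+d')*qb).
set D1 := (- (qa*M+a')*qd - (qb*M+b')*qc + (qc*M+c')*qb + (qd*M+d')*qa).
have key : (M*P)*(M*r) = (M*A1)^+2 + (M*B1)^+2 + (M*C1)^+2 + (M*D1)^+2.
  rewrite -eS /S' /A1 /B1 /C1 /D1.
  have -> : forall X, M * (P - X) = M * P - M * X by move=> X; ring.
  rewrite -E; ring.
have key2 : r * P = sq4 A1 B1 C1 D1.
  apply: (@mulfI _ (M*M)); first by rewrite mulf_neq0 // gt_eqF.
  have -> : M * M * (r * P) = (M*P)*(M*r) by ring.
  rewrite key /sq4; ring.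
have rnat : r = `|r|%N%:Z by rewrite abszE ger0_norm.
apply: (IH `|r|%N).
- by clear -rlt rnat; rewrite /M in rlt; lia.
- by apply/andP; split; clear -rpos rlt rnat mp; rewrite /M in rlt; lia.
- by exists A1, B1, C1, D1; rewrite -key2 PoszM -rnat.
Qed.
Local Close Scope ring_scope.

Lemma sq_mod_inj (p h x y : nat) : prime p -> p = h.*2.+1 -> (x <= h)%N -> (y <= h)%N ->
  (y <= x)%N -> x^2 %% p = y^2 %% p -> x = y.
Proof.
move=> pp ph xh yh yx e.
have : (p %| x^2 - y^2)%N by rewrite -eqn_mod_dvd ?leq_exp2r // e.
rewrite subn_sqr Euclid_dvdM // => /orP [h1|h1].
  have [z|nz] := eqVneq (x - y)%N 0%N; first by lia.
  have := dvdn_leq _ h1; rewrite lt0n nz => /(_ isT); lia.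
have [z|nz] := eqVneq (x + y)%N 0%N; first by lia.
have := dvdn_leq _ h1; rewrite lt0n nz => /(_ isT); lia.
Qed.

Lemma sq_mod_inj' (p h x y : nat) : prime p -> p = h.*2.+1 -> (x <= h)%N -> (y <= h)%N ->
  x^2 %% p = y^2 %% p -> x = y.
Proof.
move=> pp ph xh yh e; case: (leqP y x) => hxy.
  exact: (sq_mod_inj pp ph).
by apply/esym; apply: (sq_mod_inj pp ph) => //; apply: ltnW.
Qed.

Lemma pigeon (p : nat) : prime p -> odd p ->
  exists x y : nat, (x <= p./2)%N /\ (y <= p./2)%N /\ (p %| x^2 + y^2 + 1)%N.
Proof.
move=> pp po.
set h := p./2.
have ph : p = h.*2.+1 by rewrite -[LHS]odd_double_half po /h add1n.
have p0 : (0 < p)%N by rewrite ph.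
have gb : forall y : nat, (p.-1 - y^2 %% p < p)%N by move=> y; lia.
pose f (x : 'I_h.+1) : 'I_p := Ordinal (ltn_pmod (x^2) p0).
pose g (y : 'I_h.+1) : 'I_p := Ordinal (gb y).
have fi : injective f.
  move=> x y /(congr1 val) /= e; apply: val_inj => /=.
  by apply: (sq_mod_inj' pp ph) => //; rewrite -ltnS.
have gi : injective g.
  move=> x y /(congr1 val) /= e; apply: val_inj => /=.
  apply: (sq_mod_inj' pp ph) => //; try by rewrite -ltnS.
  have := ltn_pmod (x^2) p0; have := ltn_pmod (y^2) p0; lia.
set A := [set f x | x in 'I_h.+1].
set B := [set g x | x in 'I_h.+1].
have cA : #|A| = h.+1 by rewrite card_imset // card_ord.
have cB : #|B| = h.+1 by rewrite card_imset // card_ord.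
have : A :&: B != set0.
  apply/negP => /eqP e.
  have := max_card (mem (A :|: B)); rewrite card_ord cardsU e cards0 cA cB; lia.
case/set0Pn => z; rewrite inE => /andP [/imsetP [x _ ->] /imsetP [y _ /(congr1 val) /= e]].
exists x, y; split; first by rewrite -ltnS.
split; first by rewrite -ltnS.
have e2 : (x^2 %% p + y^2 %% p + 1 = p)%N by have := ltn_pmod (y^2) p0; lia.
have ee : (x^2 + y^2 + 1 = (x^2 %/ p + y^2 %/ p + 1) * p)%N.
  have := divn_eq (x^2) p; have := divn_eq (y^2) p; lia.
by rewrite ee dvdn_mull.
Qed.

Lemma PoszXn (n k : nat) : Posz (n ^ k)%N = (Posz n ^+ k)%R.
Proof. by rewrite -!natz natrX. Qed.

Lemma four_sq (p : nat) : prime p -> odd p -> exists a b c d : int, sq4 a b c d = Posz p.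
Proof.
move=> pp po.
have [x [y [hx [hy hd]]]] := pigeon pp po.
set h := p./2 in hx hy.
have ph : p = h.*2.+1 by rewrite -[LHS]odd_double_half po /h add1n.
set N := (x^2 + y^2 + 1)%N in hd.
have eN : N = (N %/ p * p)%N by rewrite divnK.
apply: (@descent p pp (N %/ p)).
  apply/andP; split.
    rewrite divn_gt0 ?prime_gt0 //; apply: dvdn_leq => //; rewrite /N; lia.
  rewrite ltn_divLR ?prime_gt0 // /N.
  have : (x^2 + y^2 + 1 <= h^2 + h^2 + 1)%N.
    by rewrite !leq_add2r leq_add // leq_exp2r.
  have h1 : (1 <= h)%N by have := prime_gt1 pp; rewrite ph; lia.
  rewrite ph /= !expnS !expn0 !muln1; nia.
exists (Posz x), (Posz y), (Posz 1), (Posz 0).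
rewrite -eN /sq4 /N !PoszD !PoszXn; ring.
Qed.

Local Open Scope ring_scope.

Lemma pdiv_2u (p : nat) (u X : int) : prime p -> odd p -> ~~ (p%:Z %| u)%Z ->
  (p%:Z %| 2 * u * X)%Z -> (p%:Z %| X)%Z.
Proof.
move=> pp po nu; rewrite !dvdzE !abszM /= => h.
move: nu; rewrite dvdzE /= => nu.
rewrite Euclid_dvdM // Euclid_dvdM // (negbTE nu) orbF in h.
case/orP: h => // h2.
have := dvdn_leq (isT : (0 < 2)%N) h2; have := prime_gt1 pp.
move=> h1 h3; have e2 : p = 2%N by lia.
by rewrite e2 in po.
Qed.

Lemma dvd_small (p : nat) (X : int) : (0 < p)%N -> (p%:Z %| X)%Z -> 0 <= X -> X <= p%:Z -> X = 0 \/ X = p%:Z.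
Proof.
move=> p0 /dvdzP [k ->] h1 h2.
have pz : 0 < p%:Z by lia.
have k0 : 0 <= k by rewrite -(pmulr_lge0 _ pz).
have k1 : k <= 1 by rewrite -(ler_pM2r pz) mul1r.
have [->|->] : k = 0 \/ k = 1 by lia.
  by left; rewrite mul0r.
by right; rewrite mul1r.
Qed.

Lemma dvd_sub2 (p : nat) (Y M : int) : prime p -> odd p -> M = p%:Z - 2 * Y -> (p%:Z %| M)%Z -> (p%:Z %| Y)%Z.
Proof.
move=> pp po -> h.
have h2 : (p%:Z %| 2 * 1 * Y)%Z.
  have -> : 2 * 1 * Y = p%:Z - (p%:Z - 2 * Y) by ring.
  by rewrite rpredB // dvdzz.
apply: (pdiv_2u pp po _ h2).
rewrite dvdzE /= dvdn1; apply/negP => /eqP e; have := prime_gt1 pp; lia.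
Qed.

Lemma final_contra (p : nat) (A B C D : int) : prime p -> odd p ->
  A^+2+B^+2+C^+2+D^+2 = p%:Z ->
  (p%:Z %| C^+2 + D^+2)%Z -> (p%:Z %| B^+2 + D^+2)%Z -> (p%:Z %| B^+2 + C^+2)%Z -> False.
Proof.
move=> pp po e h1 h2 h3.
have p0 := prime_gt0 pp.
have [j pj] : exists j : nat, p = (2 * j + 1)%N.
  exists p./2; rewrite -[p in LHS]odd_double_half po; clear; lia.
have nA := prime_not_sq (x:=A) pp; have nB := prime_not_sq (x:=B) pp.
have nC := prime_not_sq (x:=C) pp; have nD := prime_not_sq (x:=D) pp.
have gA : 0 <= A^+2 := sqr_ge0 A. have gB : 0 <= B^+2 := sqr_ge0 B.
have gC : 0 <= C^+2 := sqr_ge0 C. have gD : 0 <= D^+2 := sqr_ge0 D.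
have l1 : C^+2 + D^+2 <= p%:Z by clear -e gA gB; lia.
have l2 : B^+2 + D^+2 <= p%:Z by clear -e gA gC; lia.
have l3 : B^+2 + C^+2 <= p%:Z by clear -e gA gD; lia.
have k1 := dvd_small p0 h1 (addr_ge0 gC gD) l1.
have k2 := dvd_small p0 h2 (addr_ge0 gB gD) l2.
have k3 := dvd_small p0 h3 (addr_ge0 gB gC) l3.
clear h1 h2 h3 l1 l2 l3.
move: e nA nB nC nD gA gB gC gD k1 k2 k3.
move: (A^+2) (B^+2) (C^+2) (D^+2) => a b c d.
rewrite pj => e nA nB nC nD gA gB gC gD.
case=> k1; case=> k2; case=> k3.
- by apply: nA; clear -e k1 k2 k3 gB gC gD; lia.
- by clear -e k1 k2 k3 gB gC gD; lia.
- by clear -e k1 k2 k3 gB gC gD; lia.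
- by apply: nB; clear -e k1 k2 k3 gB gC gD gA; lia.
- by clear -e k1 k2 k3 gB gC gD; lia.
- by apply: nC; clear -e k1 k2 k3 gB gC gD gA; lia.
- by apply: nD; clear -e k1 k2 k3 gB gC gD gA; lia.
- by clear -e k1 k2 k3 gB gC gD gA; lia.
Qed.

Definition W1 (a b c d h1 h2 h3 : int) := (a^+2+b^+2-c^+2-d^+2)*h1 + 2*(b*c-a*d)*h2 + 2*(b*d+a*c)*h3.
Definition W2 (a b c d h1 h2 h3 : int) := 2*(b*c+a*d)*h1 + (a^+2-b^+2+c^+2-d^+2)*h2 + 2*(c*d-a*b)*h3.
Definition W3 (a b c d h1 h2 h3 : int) := 2*(b*d-a*c)*h1 + 2*(c*d+a*b)*h2 + (a^+2-b^+2-c^+2+d^+2)*h3.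

Lemma W_norm (a b c d h1 h2 h3 : int) :
  (W1 a b c d h1 h2 h3)^+2 + (W2 a b c d h1 h2 h3)^+2 + (W3 a b c d h1 h2 h3)^+2
  = (sq4 a b c d)^+2 * (h1^+2+h2^+2+h3^+2).
Proof. rewrite /W1 /W2 /W3 /sq4; ring. Qed.

Lemma rot (p : nat) (u v s : int) : prime p -> odd p -> ~~ (p%:Z %| u)%Z ->
  exists w1 w2 w3 : int, w1^+2+w2^+2+w3^+2 = (p%:Z)^+2 * (u^+2+v^+2+s^+2) /\
    ~~ [&& (p%:Z %| w1)%Z, (p%:Z %| w2)%Z & (p%:Z %| w3)%Z].
Proof.
move=> pp po nu.
have [a [b [c [d e]]]] := four_sq pp po.
apply: Classical_Prop.NNPP => Hn.
have H : forall h1 h2 h3, h1^+2+h2^+2+h3^+2 = u^+2+v^+2+s^+2 ->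
    [&& (p%:Z %| W1 a b c d h1 h2 h3)%Z, (p%:Z %| W2 a b c d h1 h2 h3)%Z & (p%:Z %| W3 a b c d h1 h2 h3)%Z].
  move=> h1 h2 h3 eh; apply/negPn/negP => nd; apply: Hn.
  exists (W1 a b c d h1 h2 h3), (W2 a b c d h1 h2 h3), (W3 a b c d h1 h2 h3); split => //.
  by rewrite W_norm e eh.
have /and3P [d11 _ _] := H u v s erefl.
have /and3P [d12 _ _] := H u (-v) (-s) ltac:(by rewrite !sqrrN).
have /and3P [_ d21 _] := H v u s ltac:(by ring).
have /and3P [_ d22 _] := H (-v) u (-s) ltac:(by rewrite !sqrrN; ring).
have /and3P [_ _ d31] := H v s u ltac:(by ring).
have /and3P [_ _ d32] := H (-v) (-s) u ltac:(by rewrite !sqrrN; ring).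
have m1 : (p%:Z %| 2 * u * (a^+2+b^+2-c^+2-d^+2))%Z.
  have -> : 2 * u * (a^+2+b^+2-c^+2-d^+2) = W1 a b c d u v s + W1 a b c d u (-v) (-s) by rewrite /W1; ring.
  by rewrite rpredD.
have m2 : (p%:Z %| 2 * u * (a^+2-b^+2+c^+2-d^+2))%Z.
  have -> : 2 * u * (a^+2-b^+2+c^+2-d^+2) = W2 a b c d v u s + W2 a b c d (-v) u (-s) by rewrite /W2; ring.
  by rewrite rpredD.
have m3 : (p%:Z %| 2 * u * (a^+2-b^+2-c^+2+d^+2))%Z.
  have -> : 2 * u * (a^+2-b^+2-c^+2+d^+2) = W3 a b c d v s u + W3 a b c d (-v) (-s) u by rewrite /W3; ring.
  by rewrite rpredD.
have n1 := pdiv_2u pp po nu m1.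
have n2 := pdiv_2u pp po nu m2.
have n3 := pdiv_2u pp po nu m3.
rewrite /sq4 in e.
apply: (final_contra pp po e).
- by apply: (dvd_sub2 pp po _ n1); rewrite -e; ring.
- by apply: (dvd_sub2 pp po _ n2); rewrite -e; ring.
- by apply: (dvd_sub2 pp po _ n3); rewrite -e; ring.
Qed.
Local Close Scope ring_scope.

Lemma sum_ge1 n (F : 'I_n -> nat) i : F i <= \sum_j F j.
Proof. by rewrite (bigD1 i) //= leq_addr. Qed.

Lemma sum_ge2 n (F : 'I_n -> nat) i j : i != j -> F i + F j <= \sum_k F k.
Proof.
move=> ij; rewrite (bigD1 i) //= leq_add2l (bigD1 j) /=; last by rewrite eq_sym.
exact: leq_addr.
Qed.

Lemma le_sq (c : nat) : c <= c ^ 2.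
Proof. by case: c => // c; rewrite expnS expn1 leq_pmulr. Qed.

Lemma P_ge2 (t a b c a' b' c' : nat) :
  a <= b <= c -> a' <= b' <= c' -> a^2 + b^2 + c^2 = t -> a'^2 + b'^2 + c'^2 = t ->
  (a, b, c) != (a', b', c') -> 2 <= P t.
Proof.
move=> /andP[ab bc] /andP[ab' bc'] e e' ne.
have hb : forall x, x^2 <= t -> x < t.+1.
  by move=> x hx; rewrite ltnS; apply: leq_trans (le_sq x) hx.
have ha1 : a < t.+1 by apply: hb; rewrite -e -addnA leq_addr.
have hb1 : b < t.+1 by apply: hb; rewrite -e addnAC leq_addl.
have hc1 : c < t.+1 by apply: hb; rewrite -e leq_addl.
have ha2 : a' < t.+1 by apply: hb; rewrite -e' -addnA leq_addr.
have hb2 : b' < t.+1 by apply: hb; rewrite -e' addnAC leq_addl.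
have hc2 : c' < t.+1 by apply: hb; rewrite -e' leq_addl.
set ia := Ordinal ha1; set ib := Ordinal hb1; set ic := Ordinal hc1.
set ia' := Ordinal ha2; set ib' := Ordinal hb2; set ic' := Ordinal hc2.
rewrite /P.
have i1 : forall (x y z : 'I_t.+1), x <= y -> y <= z -> x^2 + y^2 + z^2 = t ->
   ((x <= y) && (y <= z) && (x ^ 2 + y ^ 2 + z ^ 2 == t) : nat) = 1.
  by move=> x y z -> -> ->; rewrite eqxx.
have T1 : forall x y z : 'I_t.+1, x <= y -> y <= z -> x^2 + y^2 + z^2 = t ->
  1 <= \sum_(c0 < t.+1) ((x <= y) && (y <= c0) && (x ^ 2 + y ^ 2 + c0 ^ 2 == t) : nat).
  move=> x y z h1 h2 h3.
  apply: leq_trans _ (sum_ge1 _ z); by rewrite i1.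
have T2 : forall x y : 'I_t.+1, (exists z : 'I_t.+1, [/\ x <= y, y <= z & x^2 + y^2 + z^2 = t]) ->
  1 <= \sum_(b0 < t.+1) \sum_(c0 < t.+1) ((x <= b0) && (b0 <= c0) && (x ^ 2 + b0 ^ 2 + c0 ^ 2 == t) : nat).
  move=> x y [z [h1 h2 h3]].
  apply: leq_trans _ (sum_ge1 _ y); exact: T1 h1 h2 h3.
have [na|ea] := eqVneq ia ia'.
  have ea0 : a = a' by move/(congr1 val): na.
  have [nb|eb] := eqVneq ib ib'.
    have eb0 : b = b' by move/(congr1 val): nb.
    have nc : ic != ic'.
      apply/negP => /eqP /(congr1 val) /= ec; move: ne; by rewrite ea0 eb0 ec eqxx.
    apply: leq_trans _ (sum_ge1 _ ia).
    apply: leq_trans _ (sum_ge1 _ ib).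
    apply: leq_trans _ (sum_ge2 _ nc).
    rewrite /= ab bc e eqxx ea0 eb0 bc' e' eqxx /=.
    by rewrite ?ab' ?bc' ?e' ?eqxx.
  apply: leq_trans _ (sum_ge1 _ ia).
  apply: leq_trans _ (sum_ge2 _ eb).
  rewrite -add1n leq_add //; first exact: (T1 ia ib ic ab bc e).
  rewrite na; exact: (T1 ia' ib' ic' ab' bc' e').
apply: leq_trans _ (sum_ge2 _ ea).
rewrite -add1n leq_add //.
  by apply: (T2 ia ib); exists ic; split.
by apply: (T2 ia' ib'); exists ic'; split.
Qed.

Definition srt (x y z : nat) : nat * nat * nat :=
  if x <= y then (if y <= z then (x,y,z) else if x <= z then (x,z,y) else (z,x,y))
  else (if x <= z then (y,x,z) else if y <= z then (y,z,x) else (z,y,x)).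

Lemma srt_spec x y z l m h : srt x y z = (l, m, h) -> l <= m <= h /\
  ((l = x /\ m = y /\ h = z) \/ (l = x /\ m = z /\ h = y) \/ (l = y /\ m = x /\ h = z) \/
   (l = y /\ m = z /\ h = x) \/ (l = z /\ m = x /\ h = y) \/ (l = z /\ m = y /\ h = x)).
Proof.
rewrite /srt; case: (leqP x y) => h1; case: (leqP y z) => h2; case: (leqP x z) => h3;
  move=> [<- <- <-]; (split; [apply/andP; split; lia | tauto]).
Qed.

Lemma abs_sq (w : int) : Posz (`|w|%N ^ 2)%N = (w ^+ 2)%R.
Proof. by rewrite PoszXn abszE -normrX ger0_norm // sqr_ge0. Qed.

Lemma two_vecs (t a b c q : nat) (W1 W2 W3 : int) : a <= b <= c -> a^2+b^2+c^2 = t ->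
  (W1^+2+W2^+2+W3^+2 = Posz t)%R -> q %| a -> q %| b -> q %| c ->
  ~~ [&& q %| `|W1|%N, q %| `|W2|%N & q %| `|W3|%N] -> 2 <= P t.
Proof.
move=> abc e eW qa qb qc nq.
case E: (srt `|W1|%N `|W2|%N `|W3|%N) => [[l m] h].
have [lmh pm] := srt_spec E.
have ex : `|W1|%N^2 + `|W2|%N^2 + `|W3|%N^2 = t.
  apply/eqP; rewrite -(eqr_nat int) !natrD !natz !abs_sq eW //.
have el : l^2 + m^2 + h^2 = t.
  by rewrite -ex; case: pm => [[-> [-> ->]]|[[-> [-> ->]]|[[-> [-> ->]]|[[-> [-> ->]]|[[-> [-> ->]]|[-> [-> ->]]]]]]]; lia.
apply: (P_ge2 abc lmh e el).
apply/negP => /eqP [ea eb ec]; subst l m h.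
move: nq; case: pm => [[<- [<- <-]]|[[<- [<- <-]]|[[<- [<- <-]]|[[<- [<- <-]]|[[<- [<- <-]]|[<- [<- <-]]]]]]];
  by rewrite qa qb qc.
Qed.

Lemma rot_P (t a b c p e : nat) (u v s : int) : prime p -> odd p -> 0 < e -> a <= b <= c ->
  a^2+b^2+c^2 = t -> p^e %| a -> p^e %| b -> p^e %| c -> ~~ (Posz p %| u)%Z ->
  (Posz t = (Posz (p^e))^+2 * (u^+2+v^+2+s^+2))%R -> 2 <= P t.
Proof.
move=> pp po e0 abc et da db dc nu eq.
have [w1 [w2 [w3 [ew nw]]]] := rot v s pp po nu.
set f := (Posz (p ^ e.-1)).
apply: (@two_vecs t a b c (p^e) (f * w1) (f * w2) (f * w3)) => //.
  rewrite !exprMn -!mulrDr ew eq /f -!PoszXn.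
  have -> : (p ^ e = p ^ e.-1 * p)%N by rewrite -expnSr prednK.
  rewrite PoszM; ring.
have pe : (p ^ e = p ^ e.-1 * p)%N by rewrite -expnSr prednK.
have fp : (0 < p ^ e.-1)%N by rewrite expn_gt0 prime_gt0.
apply/negP => /and3P [h1 h2 h3]; move: nw; rewrite !dvdzE /=.
by move: h1 h2 h3; rewrite /f !abszM /= pe !dvdn_pmul2l // => -> -> ->.
Qed.

Lemma odd_prime_P (t a b c p : nat) : prime p -> odd p -> a <= b <= c -> a^2+b^2+c^2 = t ->
  0 < c -> p %| a -> p %| b -> p %| c -> 2 <= P t.
Proof.
move=> pp po abc et c0 pa pb pc.
set g := gcdn a (gcdn b c).
have g0 : 0 < g by rewrite gcdn_gt0 gcdn_gt0 c0 !orbT.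
set e := logn p g.
have pg : p %| g by rewrite dvdn_gcd pa dvdn_gcd pb pc.
have e0 : 0 < e by rewrite logn_gt0 mem_primes pp g0 pg.
have qg : p ^ e %| g := pfactor_dvdnn p g.
have qa : p ^ e %| a by apply: dvdn_trans qg (dvdn_gcdl _ _).
have qb : p ^ e %| b by apply: dvdn_trans qg (dvdn_trans (dvdn_gcdr _ _) (dvdn_gcdl _ _)).
have qc : p ^ e %| c by apply: dvdn_trans qg (dvdn_trans (dvdn_gcdr _ _) (dvdn_gcdr _ _)).
set za := a %/ p ^ e; set zb := b %/ p ^ e; set zc := c %/ p ^ e.
have ea : a = za * p ^ e by rewrite divnK.
have eb : b = zb * p ^ e by rewrite divnK.
have ec : c = zc * p ^ e by rewrite divnK.
have nz : ~~ [&& p %| za, p %| zb & p %| zc].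
  apply/negP => /and3P [h1 h2 h3].
  have h : p ^ e.+1 %| g.
    rewrite expnSr !dvdn_gcd ea eb ec ![_ * p ^ e]mulnC !dvdn_pmul2l ?expn_gt0 ?prime_gt0 //.
    by rewrite h1 h2 h3.
  by move: h; rewrite pfactor_dvdn // ltnn.
have eT : (Posz t = (Posz (p^e))^+2 * ((Posz za)^+2 + (Posz zb)^+2 + (Posz zc)^+2))%R.
  rewrite -et ea eb ec !PoszD !PoszXn !PoszM !PoszXn; ring.
case pza: (p %| za).
  case pzb: (p %| zb).
    have pzc : ~~ (p %| zc) by move: nz; rewrite pza pzb.
    apply: (@rot_P t a b c p e (Posz zc) (Posz za) (Posz zb)) => //.
    by rewrite eT; congr (_ * _)%R; ring.
  apply: (@rot_P t a b c p e (Posz zb) (Posz za) (Posz zc)) => //.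
    by rewrite dvdzE /= pzb.
  by rewrite eT; congr (_ * _)%R; ring.
apply: (@rot_P t a b c p e (Posz za) (Posz zb) (Posz zc)) => //.
by rewrite dvdzE /= pza.
Qed.

Local Open Scope ring_scope.

Definition par (x1 x2 x3 y1 y2 y3 : int) := x1*y2 = x2*y1 /\ x1*y3 = x3*y1 /\ x2*y3 = x3*y2.
Definition oddz (x : int) := exists k : int, x = 2 * k + 1.

Lemma mul_eq0_l (x y : int) : x * y = 0 -> y != 0 -> x = 0.
Proof. by move/eqP; rewrite mulf_eq0 => /orP [/eqP //|/eqP ->]; rewrite eqxx. Qed.

Lemma nz_gen (e f g c2 d2 d3 c3 h2 h3 : int) :
  oddz (e + c2 + c3) -> oddz (e + f + g) -> par e f g c2 d2 d3 -> par e f g c3 h2 h3 -> e != 0.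
Proof.
move=> [k1 o1] [k2 o2] [p1 [p2 p3]] [q1 [q2 q3]].
apply/negP => /eqP e0; subst e.
have [c20|c2n] := eqVneq c2 0.
  have [c30|c3n] := eqVneq c3 0; first by subst; lia.
  have f0 : f = 0 by apply: (mul_eq0_l _ c3n); rewrite -q1 mul0r.
  have g0 : g = 0 by apply: (mul_eq0_l _ c3n); rewrite -q2 mul0r.
  subst; lia.
have f0 : f = 0 by apply: (mul_eq0_l _ c2n); rewrite -p1 mul0r.
have g0 : g = 0 by apply: (mul_eq0_l _ c2n); rewrite -p2 mul0r.
subst; lia.
Qed.

Lemma le_mul1 (E D : int) : 0 <= E -> 1 <= D -> E <= E * D.
Proof. move=> h1 h2; nia. Qed.

Lemma ab_gen (e f g c2 d2 d3 c3 h2 h3 : int) :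
  e != 0 -> f != 0 -> g != 0 -> c2 != 0 -> d2 != 0 -> d3 != 0 -> c3 != 0 -> h2 != 0 -> h3 != 0 ->
  `|e| + `|c2| + `|c3| <= 5 -> `|e| + `|f| + `|g| <= 5 ->
  par e f g c2 d2 d3 -> par e f g c3 h2 h3 -> `|e| = 1.
Proof.
move=> en fn gn c2n d2n d3n c3n h2n h3n s1 s2 [p1 [p2 p3]] [q1 [q2 q3]].
have pos : forall x : int, x != 0 -> 1 <= `|x| by move=> x xn; rewrite -normr_gt0 in xn; lia.
have := pos _ en; have := pos _ fn; have := pos _ gn; have := pos _ c2n; have := pos _ d2n.
have := pos _ d3n; have := pos _ c3n; have := pos _ h2n; have := pos _ h3n.
move: (congr1 (fun x => `|x|) p1) (congr1 (fun x => `|x|) p2) (congr1 (fun x => `|x|) q1)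
      (congr1 (fun x => `|x|) q2) => /=.
rewrite !normrM.
move: `|e| `|f| `|g| `|c2| `|d2| `|d3| `|c3| `|h2| `|h3| s1 s2 => E F G C2 D2 D3 C3 H2 H3 s1 s2.
move=> r1 r2 r3 r4 H3p H2p C3p D3p D2p C2p Gp Fp Ep.
have [C21|C21] : C2 = 1 \/ 2 <= C2 by clear -C2p s1 Ep C3p; lia.
  subst C2; rewrite mulr1 in r1; rewrite mulr1 in r2.
  have := le_mul1 (le_trans ler01 Ep) D2p; have := le_mul1 (le_trans ler01 Ep) D3p; rewrite r1 r2.
  clear -s2 Ep Fp Gp; lia.
have [C31|C31] : C3 = 1 \/ 2 <= C3 by clear -C3p s1 Ep C21; lia.
  subst C3; rewrite mulr1 in r3; rewrite mulr1 in r4.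
  have := le_mul1 (le_trans ler01 Ep) H2p; have := le_mul1 (le_trans ler01 Ep) H3p; rewrite r3 r4.
  clear -s2 Ep Fp Gp; lia.
clear -s1 Ep C21 C31; lia.
Qed.

Lemma pm1_sum (u v w a b c : int) : `|u| = 1 -> `|v| = 1 -> `|w| = 1 ->
  u * a + v * b + w * c = 0 -> 0 <= a -> a <= b -> b <= c -> 0 < c -> c = a + b.
Proof.
move=> hu hv hw e h1 h2 h3 h4.
have s : forall x : int, `|x| = 1 -> x = 1 \/ x = -1.
  move=> x; case: (ger0P x) => hx hx1; [left|right]; lia.
move: e; case: (s _ hu) => ->; case: (s _ hv) => ->; case: (s _ hw) => ->; lia.
Qed.

Lemma bnd50 (x y z w : int) : `|x| <= 5 -> `|y| <= 5 -> `|z| <= 5 -> `|w| <= 5 -> `|x * y - z * w| <= 50.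
Proof.
move=> hx hy hz hw; apply: le_trans (ler_normB _ _) _; rewrite !normrM.
have := normr_ge0 x; have := normr_ge0 y; have := normr_ge0 z; have := normr_ge0 w.
move: `|x| `|y| `|z| `|w| hx hy hz hw => X Y Z W *; nia.
Qed.

Definition crossok (a b c : int) :=
  exists d1 d2 d3 : int, [/\ (d1 != 0) || (d2 != 0) || (d3 != 0), `|d1| <= 50, `|d2| <= 50 & `|d3| <= 50]
     /\ [/\ a*d2 = b*d1, a*d3 = c*d1 & b*d3 = c*d2].

Lemma cross_case (x1 x2 x3 y1 y2 y3 a b c : int) :
  `|x1| <= 5 -> `|x2| <= 5 -> `|x3| <= 5 -> `|y1| <= 5 -> `|y2| <= 5 -> `|y3| <= 5 ->
  x1*a + x2*b + x3*c = 0 -> y1*a + y2*b + y3*c = 0 ->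
  (x2*y3 - x3*y2 != 0) || (x3*y1 - x1*y3 != 0) || (x1*y2 - x2*y1 != 0) -> crossok a b c.
Proof.
move=> b1 b2 b3 b4 b5 b6 e1 e2 nz.
exists (x2*y3 - x3*y2), (x3*y1 - x1*y3), (x1*y2 - x2*y1); split.
  by split => //; apply: bnd50.
split; apply/eqP; rewrite -subr_eq0.
- have -> : a * (x3 * y1 - x1 * y3) - b * (x2 * y3 - x3 * y2) = - ((x1*a + x2*b + x3*c) * y3 - (y1*a + y2*b + y3*c) * x3) by ring.
  by rewrite e1 e2 !mul0r subrr oppr0.
- have -> : a * (x1 * y2 - x2 * y1) - c * (x2 * y3 - x3 * y2) = (x1*a + x2*b + x3*c) * y2 - (y1*a + y2*b + y3*c) * x2 by ring.
  by rewrite e1 e2 !mul0r subrr.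
- have -> : b * (x1 * y2 - x2 * y1) - c * (x3 * y1 - x1 * y3) = - ((x1*a + x2*b + x3*c) * y1 - (y1*a + y2*b + y3*c) * x1) by ring.
  by rewrite e1 e2 !mul0r subrr oppr0.
Qed.

Ltac ptac z1 z2 z3 z4 z5 z6 z7 z8 z9 := rewrite /par; clear -z1 z2 z3 z4 z5 z6 z7 z8 z9; split; [|split]; lia.

Lemma PL (m11 m12 m13 m21 m22 m23 m31 m32 m33 a b c : int) :
  0 <= a -> a <= b -> b <= c -> 0 < c ->
  m11*a + m12*b + m13*c = 0 -> m21*a + m22*b + m23*c = 0 -> m31*a + m32*b + m33*c = 0 ->
  `|m11| + `|m12| + `|m13| <= 5 -> `|m21| + `|m22| + `|m23| <= 5 -> `|m31| + `|m32| + `|m33| <= 5 ->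
  `|m11| + `|m21| + `|m31| <= 5 -> `|m12| + `|m22| + `|m32| <= 5 -> `|m13| + `|m23| + `|m33| <= 5 ->
  oddz (m11+m12+m13) -> oddz (m21+m22+m23) -> oddz (m31+m32+m33) ->
  oddz (m11+m21+m31) -> oddz (m12+m22+m32) -> oddz (m13+m23+m33) ->
  c = a + b \/ crossok a b c.
Proof.
move=> a0 ab bc c0 e1 e2 e3 r1 r2 r3 k1 k2 k3 o1 o2 o3 q1 q2 q3.
have bd : forall x y z : int, `|x| + `|y| + `|z| <= 5 -> [/\ `|x| <= 5, `|y| <= 5 & `|z| <= 5].
  move=> x y z h; have := normr_ge0 x; have := normr_ge0 y; have := normr_ge0 z.
  by move: `|x| `|y| `|z| h => X Y Z h *; split; lia.
have [b11 b12 b13] := bd _ _ _ r1.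
have [b21 b22 b23] := bd _ _ _ r2.
have [b31 b32 b33] := bd _ _ _ r3.
case C12: ((m12 * m23 - m13 * m22 != 0) || (m13 * m21 - m11 * m23 != 0) || (m11 * m22 - m12 * m21 != 0)).
  by right; apply: (cross_case b11 b12 b13 b21 b22 b23 e1 e2 C12).
case C13: ((m12 * m33 - m13 * m32 != 0) || (m13 * m31 - m11 * m33 != 0) || (m11 * m32 - m12 * m31 != 0)).
  by right; apply: (cross_case b11 b12 b13 b31 b32 b33 e1 e3 C13).
case C23: ((m22 * m33 - m23 * m32 != 0) || (m23 * m31 - m21 * m33 != 0) || (m21 * m32 - m22 * m31 != 0)).
  by right; apply: (cross_case b21 b22 b23 b31 b32 b33 e2 e3 C23).
left.
move: C12 C13 C23 => /negbT /norP [/norP [/negPn /eqP z1 /negPn /eqP z2] /negPn /eqP z3].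
move=> /negbT /norP [/norP [/negPn /eqP z4 /negPn /eqP z5] /negPn /eqP z6].
move=> /negbT /norP [/norP [/negPn /eqP z7 /negPn /eqP z8] /negPn /eqP z9].
have odd_tac : forall x y : int, oddz x -> x = y -> oddz y by move=> x y h <-.
have n11 : m11 != 0.
  by apply: (@nz_gen m11 m12 m13 m21 m22 m23 m31 m32 m33) => //; ptac z1 z2 z3 z4 z5 z6 z7 z8 z9.
have n12 : m12 != 0.
  apply: (@nz_gen m12 m11 m13 m22 m21 m23 m32 m31 m33); try ptac z1 z2 z3 z4 z5 z6 z7 z8 z9.
  - by apply: odd_tac q2 _.
  - by apply: odd_tac o1 _; ring.
have n13 : m13 != 0.
  apply: (@nz_gen m13 m11 m12 m23 m21 m22 m33 m31 m32); try ptac z1 z2 z3 z4 z5 z6 z7 z8 z9.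
  - by apply: odd_tac q3 _.
  - by apply: odd_tac o1 _; ring.
have n21 : m21 != 0.
  apply: (@nz_gen m21 m22 m23 m11 m12 m13 m31 m32 m33); try ptac z1 z2 z3 z4 z5 z6 z7 z8 z9.
  - by apply: odd_tac q1 _; ring.
  - by apply: odd_tac o2 _.
have n22 : m22 != 0.
  apply: (@nz_gen m22 m21 m23 m12 m11 m13 m32 m31 m33); try ptac z1 z2 z3 z4 z5 z6 z7 z8 z9.
  - by apply: odd_tac q2 _; ring.
  - by apply: odd_tac o2 _; ring.
have n23 : m23 != 0.
  apply: (@nz_gen m23 m21 m22 m13 m11 m12 m33 m31 m32); try ptac z1 z2 z3 z4 z5 z6 z7 z8 z9.
  - by apply: odd_tac q3 _; ring.
  - by apply: odd_tac o2 _; ring.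
have n31 : m31 != 0.
  apply: (@nz_gen m31 m32 m33 m11 m12 m13 m21 m22 m23); try ptac z1 z2 z3 z4 z5 z6 z7 z8 z9.
  - by apply: odd_tac q1 _; ring.
  - by apply: odd_tac o3 _.
have n32 : m32 != 0.
  apply: (@nz_gen m32 m31 m33 m12 m11 m13 m22 m21 m23); try ptac z1 z2 z3 z4 z5 z6 z7 z8 z9.
  - by apply: odd_tac q2 _; ring.
  - by apply: odd_tac o3 _; ring.
have n33 : m33 != 0.
  apply: (@nz_gen m33 m31 m32 m13 m11 m12 m23 m21 m22); try ptac z1 z2 z3 z4 z5 z6 z7 z8 z9.
  - by apply: odd_tac q3 _; ring.
  - by apply: odd_tac o3 _; ring.
have a11 : `|m11| = 1.
  apply: (@ab_gen m11 m12 m13 m21 m22 m23 m31 m32 m33) => //; ptac z1 z2 z3 z4 z5 z6 z7 z8 z9.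
have a12 : `|m12| = 1.
  apply: (@ab_gen m12 m11 m13 m22 m21 m23 m32 m31 m33) => //; try ptac z1 z2 z3 z4 z5 z6 z7 z8 z9.
  by clear -r1; lia.
have a13 : `|m13| = 1.
  apply: (@ab_gen m13 m11 m12 m23 m21 m22 m33 m31 m32) => //; try ptac z1 z2 z3 z4 z5 z6 z7 z8 z9.
  by clear -r1; lia.
exact: (pm1_sum a11 a12 a13 e1 a0 ab bc c0).
Qed.

Lemma lam_bound (x d lam : int) : d = lam * x -> lam != 0 -> `|d| <= 50 -> `|x| <= 50.
Proof.
move=> -> ln; rewrite normrM => h.
have : 1 <= `|lam| by rewrite -normr_gt0 in ln; lia.
have := normr_ge0 x; move: `|lam| `|x| h => L X h *; nia.
Qed.

Lemma cross_gcd (a b c : nat) : crossok (Posz a) (Posz b) (Posz c) -> (10^6 <= a^2+b^2+c^2)%N ->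
  (1 < gcdn a (gcdn b c))%N.
Proof.
move=> [d1 [d2 [d3 [[nz h1 h2 h3] [x1 x2 x3]]]]] big.
case: (ltnP 1 (gcdn a (gcdn b c))) => // g1.
have [g0|g1'] : (gcdn a (gcdn b c) = 0 \/ gcdn a (gcdn b c) = 1)%N.
  by move: g1; clear; case: (gcdn a (gcdn b c)) => [|[|n]] //; auto.
  have : (0 < gcdn a (gcdn b c))%N.
    rewrite !gcdn_gt0; move: big; case: a {x1 x2 x3 g0 g1} => [|a] //.
    case: b => [|b] //; by case: c.
  by rewrite g0.
have [u [v e1]] := Bezoutz (Posz a) (Posz (gcdn b c)).
have [u' [v' e2]] := Bezoutz (Posz b) (Posz c).
rewrite /gcdz /= g1' in e1; rewrite /gcdz /= in e2.
set w1 := u; set w2 := v * u'; set w3 := v * v'.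
have e3 : u * a%:Z + v * (u' * b%:Z + v' * c%:Z) = 1 by rewrite e2; exact: e1.
have eb : w1 * a%:Z + w2 * b%:Z + w3 * c%:Z = 1.
  by rewrite -e3 /w1 /w2 /w3; ring.
set lam := w1 * d1 + w2 * d2 + w3 * d3.
have l1 : d1 = lam * a%:Z.
  by rewrite -[LHS]mulr1 -eb /lam; apply/eqP; rewrite -subr_eq0; apply/eqP;
     rewrite (_ : _ - _ = w2 * (b%:Z * d1 - a%:Z * d2) + w3 * (c%:Z * d1 - a%:Z * d3)); [rewrite x1 x2 !subrr !mulr0 addr0 // | ring].
have l2 : d2 = lam * b%:Z.
  by rewrite -[LHS]mulr1 -eb /lam; apply/eqP; rewrite -subr_eq0; apply/eqP;
     rewrite (_ : _ - _ = w1 * (a%:Z * d2 - b%:Z * d1) + w3 * (c%:Z * d2 - b%:Z * d3)); [rewrite x1 x3 !subrr !mulr0 addr0 // | ring].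
have l3 : d3 = lam * c%:Z.
  by rewrite -[LHS]mulr1 -eb /lam; apply/eqP; rewrite -subr_eq0; apply/eqP;
     rewrite (_ : _ - _ = w1 * (a%:Z * d3 - c%:Z * d1) + w2 * (b%:Z * d3 - c%:Z * d2)); [rewrite x2 x3 !subrr !mulr0 addr0 // | ring].
have ln : lam != 0.
  apply/negP => /eqP l0; move: nz; by rewrite l1 l2 l3 l0 !mul0r eqxx.
have := lam_bound l1 ln h1; have := lam_bound l2 ln h2; have := lam_bound l3 ln h3.
rewrite !ger0_norm // => ha hb hc.
have : (a^2 + b^2 + c^2 <= 50^2 + 50^2 + 50^2)%N.
  by rewrite !leq_add // leq_exp2r //; lia.
by move: big; clear; lia.
Qed.

Local Close Scope ring_scope.
Lemma odd_prime_of (t a b c : nat) : (1 < gcdn a (gcdn b c))%N -> a^2+b^2+c^2 = t -> t %% 4 = 2 ->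
  exists p, [/\ prime p, odd p, p %| a, p %| b & p %| c].
Proof.
move=> g1 et t4.
set g := gcdn a (gcdn b c) in g1.
have ga : (g %| a)%N by apply: dvdn_gcdl.
have gb : (g %| b)%N by apply: dvdn_trans (dvdn_gcdr _ _) (dvdn_gcdl _ _).
have gc : (g %| c)%N by apply: dvdn_trans (dvdn_gcdr _ _) (dvdn_gcdr _ _).
have go : odd g.
  case ev: (odd g) => //.
  have g2 : (2 %| g)%N by rewrite dvdn2 ev.
  have [ka ea] : exists k, a = (2 * k)%N by move: (dvdn_trans g2 ga) => /dvdnP [k ->]; exists k; lia.
  have [kb eb] : exists k, b = (2 * k)%N by move: (dvdn_trans g2 gb) => /dvdnP [k ->]; exists k; lia.
  have [kc ec] : exists k, c = (2 * k)%N by move: (dvdn_trans g2 gc) => /dvdnP [k ->]; exists k; lia.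
  move: t4; rewrite -et ea eb ec !expnMn.
  have -> : (2 ^ 2 * ka ^ 2 + 2 ^ 2 * kb ^ 2 + 2 ^ 2 * kc ^ 2 = 4 * (ka^2 + kb^2 + kc^2))%N by lia.
  by rewrite modnMr.
exists (pdiv g); split.
- exact: pdiv_prime.
- case ev: (odd (pdiv g)) => //.
  have h2 : (2 %| pdiv g)%N by rewrite dvdn2 ev.
  by move: go; have := dvdn_trans h2 (pdiv_dvd g); rewrite dvdn2 => /negPf ->.
- exact: dvdn_trans (pdiv_dvd g) ga.
- exact: dvdn_trans (pdiv_dvd g) gb.
- exact: dvdn_trans (pdiv_dvd g) gc.
Qed.

Local Open Scope ring_scope.

Definition slot (x y z : nat) (j : nat) : nat :=
  if (x <= y)%N then (if (y <= z)%N then j else if (x <= z)%N then nth 0%N [:: 0; 2; 1]%N j else nth 0%N [:: 1; 2; 0]%N j)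
  else (if (x <= z)%N then nth 0%N [:: 1; 0; 2]%N j else if (y <= z)%N then nth 0%N [:: 2; 0; 1]%N j else nth 0%N [:: 2; 1; 0]%N j).

Definition xs (a b c : nat) (s : 'I_3) : int := nth 0 [:: Posz a; Posz b; Posz c] s.

Definition sgz' (w : int) : int := if w < 0 then -1 else 1.

Definition Qof (w : 'I_3 -> int) (j s : 'I_3) : int :=
  if slot `|w ord0|%N `|w (lift ord0 ord0)|%N `|w (lift ord0 (lift ord0 ord0))|%N j == s then sgz' (w j) else 0.

Lemma sgz'_abs (w : int) : sgz' w * Posz `|w|%N = w.
Proof. rewrite /sgz' abszE; case: (ltrP w 0) => h; [rewrite ltr0_norm // | rewrite ger0_norm //]; ring. Qed.

Lemma sgz'_norm (w : int) : `|sgz' w| = 1.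
Proof. by rewrite /sgz'; case: (w < 0). Qed.

Lemma sgz'_odd (w : int) : oddz (sgz' w).
Proof. by rewrite /sgz'; case: (w < 0); [exists (-1) | exists 0]. Qed.

Lemma sum3 (F : 'I_3 -> int) : \sum_(s < 3) F s = F ord0 + F (lift ord0 ord0) + F (lift ord0 (lift ord0 ord0)).
Proof. by rewrite !big_ord_recl big_ord0 addr0 addrA. Qed.

Lemma ord3P (j : 'I_3) : j = ord0 \/ j = lift ord0 ord0 \/ j = lift ord0 (lift ord0 ord0).
Proof.
case: j => [[|[|[|n]]] h] //.
- by left; apply: val_inj.
- by right; left; apply: val_inj.
- by right; right; apply: val_inj.
Qed.

Lemma Qof_spec (w : 'I_3 -> int) (a b c : nat) :
  srt `|w ord0|%N `|w (lift ord0 ord0)|%N `|w (lift ord0 (lift ord0 ord0))|%N = (a, b, c) ->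
  [/\ forall j, w j = \sum_(s < 3) Qof w j s * xs a b c s,
      forall j, \sum_(s < 3) `|Qof w j s| = 1 /\ oddz (\sum_(s < 3) Qof w j s) &
      forall s, \sum_(j < 3) `|Qof w j s| = 1 /\ oddz (\sum_(j < 3) Qof w j s)].
Proof.
rewrite /Qof /srt.
set w0 := w ord0; set w1 := w (lift ord0 ord0); set w2 := w (lift ord0 (lift ord0 ord0)).
rewrite /slot.
case: (leqP `|w0|%N `|w1|%N) => h1; case: (leqP `|w1|%N `|w2|%N) => h2;
  case: (leqP `|w0|%N `|w2|%N) => h3; move=> [ea eb ec]; subst a b c;
  (split; [ move=> j; rewrite sum3; case: (ord3P j) => [->|[->|->]];
            rewrite /= /xs /= ?mulr0 ?mul0r ?addr0 ?add0r ?sgz'_abs //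
          | move=> j; rewrite !sum3; case: (ord3P j) => [->|[->|->]];
            rewrite /= ?normr0 ?addr0 ?add0r ?sgz'_norm; split => //; apply: sgz'_odd
          | move=> s; rewrite !sum3; case: (ord3P s) => [->|[->|->]];
            rewrite /= ?normr0 ?addr0 ?add0r ?sgz'_norm; split => //; apply: sgz'_odd ]).
Qed.

Lemma odd_add2 (x y : int) : oddz x -> oddz y -> exists k, x + y = 2 * k.
Proof. by move=> [k1 ->] [k2 ->]; exists (k1 + k2 + 1); ring. Qed.
Lemma even_odd (x y : int) : (exists k, x = 2 * k) -> oddz y -> oddz (x + y).
Proof. by move=> [k1 ->] [k2 ->]; exists (k1 + k2); ring. Qed.
Lemma odd_even (x y : int) : oddz x -> (exists k, y = 2 * k) -> oddz (x + y).
Proof. by move=> [k1 ->] [k2 ->]; exists (k1 + k2); ring. Qed.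

Lemma sumodd n (F : 'I_n -> int) : (forall i, oddz (F i)) -> exists k, \sum_(i < n) F i = 2 * k + (odd n)%:R.
Proof.
elim: n F => [|n IH] F h; first by exists 0; rewrite big_ord0.
rewrite big_ord_recr /=.
have [k ek] := IH (fun i => F (widen_ord (leqnSn n) i)) (fun i => h _).
have [k' ek'] := h ord_max.
rewrite ek ek'; case: (odd n) => /=.
  by exists (k + k' + 1); rewrite /=; ring.
by exists (k + k'); rewrite /=; ring.
Qed.

Lemma odd5 (F : 'I_5 -> int) : (forall i, oddz (F i)) -> oddz (\sum_(i < 5) F i).
Proof. by move=> h; have [k ->] := sumodd h; exists k. Qed.

Lemma M_props (v : 'I_5 -> 'I_3 -> int) (a b c : nat) :
  (forall i, srt `|v i ord0|%N `|v i (lift ord0 ord0)|%N `|v i (lift ord0 (lift ord0 ord0))|%N = (a, b, c)) ->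
  (forall j, \sum_(i < 5) v i j = 0) ->
  [/\ forall j, \sum_(s < 3) (\sum_(i < 5) Qof (v i) j s) * xs a b c s = 0,
      forall j, \sum_(s < 3) `|\sum_(i < 5) Qof (v i) j s| <= 5,
      forall j, oddz (\sum_(s < 3) \sum_(i < 5) Qof (v i) j s),
      forall s, \sum_(j < 3) `|\sum_(i < 5) Qof (v i) j s| <= 5 &
      forall s, oddz (\sum_(j < 3) \sum_(i < 5) Qof (v i) j s)].
Proof.
move=> hs hz.
have sp := fun i => Qof_spec (hs i).
split.
- move=> j; apply: eq_trans _ (hz j).
  under eq_bigr do rewrite mulr_suml.
  rewrite exchange_big /=; apply: eq_bigr => i _.
  by case: (sp i) => h1 _ _; rewrite -h1.
- move=> j.
  apply: (le_trans (y := \sum_(s < 3) \sum_(i < 5) `|Qof (v i) j s|)).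
    by apply: ler_sum => s _; apply: ler_norm_sum.
  rewrite exchange_big /=.
  rewrite (eq_bigr (fun _ => 1)); first by rewrite sumr_const card_ord.
  by move=> i _; case: (sp i) => _ h2 _; case: (h2 j).
- move=> j; rewrite exchange_big /=; apply: odd5 => i.
  by case: (sp i) => _ h2 _; case: (h2 j).
- move=> s.
  apply: (le_trans (y := \sum_(j < 3) \sum_(i < 5) `|Qof (v i) j s|)).
    by apply: ler_sum => j _; apply: ler_norm_sum.
  rewrite exchange_big /=.
  rewrite (eq_bigr (fun _ => 1)); first by rewrite sumr_const card_ord.
  by move=> i _; case: (sp i) => _ _ h3; case: (h3 s).
- move=> s; rewrite exchange_big /=; apply: odd5 => i.
  by case: (sp i) => _ _ h3; case: (h3 s).
Qed.

Local Close Scope ring_scope.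

Lemma srt_sum (x y z l m h : nat) : srt x y z = (l, m, h) -> l <= m <= h /\ l^2 + m^2 + h^2 = x^2 + y^2 + z^2.
Proof.
move=> E; have [lmh pm] := srt_spec E; split => //.
by case: pm => [[-> [-> ->]]|[[-> [-> ->]]|[[-> [-> ->]]|[[-> [-> ->]]|[[-> [-> ->]]|[-> [-> ->]]]]]]]; lia.
Qed.

Lemma norm_nat (w : 'I_3 -> int) (t : nat) : (\sum_(j < 3) (w j) ^+ 2)%R = Posz t ->
  `|w ord0|%N ^ 2 + `|w (lift ord0 ord0)|%N ^ 2 + `|w (lift ord0 (lift ord0 ord0))|%N ^ 2 = t.
Proof.
rewrite sum3 => e; apply/eqP; rewrite -(eqr_nat int) !natrD !natz !abs_sq e //.
Qed.

Lemma C5 (t : nat) : C 3 t = 5 -> balanced 3 t 5 /\ ~ balanced 3 t 3.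
Proof.
rewrite /C; case: excluded_middle_informative => // H.
case: ex_minnP => n hn hmin en; subst n.
split.
  by move: hn; rewrite /odd_balanced; case: excluded_middle_informative.
move=> hb3.
have : odd_balanced 3 t 3 by rewrite /odd_balanced; case: excluded_middle_informative.
by move/hmin.
Qed.

Lemma PL_fun (M : 'I_3 -> 'I_3 -> int) (a b c : nat) : a <= b <= c -> 0 < c ->
  (forall j, (\sum_(s < 3) M j s * xs a b c s)%R = 0%R) ->
  (forall j, (\sum_(s < 3) `|M j s| <= 5)%R) -> (forall j, oddz (\sum_(s < 3) M j s)%R) ->
  (forall s, (\sum_(j < 3) `|M j s| <= 5)%R) -> (forall s, oddz (\sum_(j < 3) M j s)%R) ->
  c = a + b \/ crossok (Posz a) (Posz b) (Posz c).
Proof.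
move=> /andP [ab bc] c0 e r o k q.
set o0 : 'I_3 := ord0; set o1 : 'I_3 := lift ord0 ord0; set o2 : 'I_3 := lift ord0 (lift ord0 ord0).
have := e o0; have := e o1; have := e o2.
have := r o0; have := r o1; have := r o2.
have := o o0; have := o o1; have := o o2.
have := k o0; have := k o1; have := k o2.
have := q o0; have := q o1; have := q o2.
rewrite !sum3 /xs /= -/o0 -/o1 -/o2.
move=> q3 q2 q1 k3 k2 k1 o3' o2' o1' r3 r2 r1 e3 e2 e1.
have [h|h] := PL (a:=Posz a) (b:=Posz b) (c:=Posz c) (lez_nat 0 a) ab bc c0 e1 e2 e3 r1 r2 r3 k1 k2 k3 o1' o2' o3' q1 q2 q3.
  by left; move: h; rewrite -PoszD => -[].
by right.
Qed.

Lemma three_config (t a b c : nat) : c = a + b -> a^2 + b^2 + c^2 = t -> balanced 3 t 3.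
Proof.
move=> ec et; subst c.
pose rows : seq (seq int) := [:: [:: Posz a; (- Posz (a + b))%R; Posz b]; [:: Posz b; Posz a; (- Posz (a + b))%R]; [:: (- Posz (a + b))%R; Posz b; Posz a]].
exists (fun i j => nth 0%R (nth [::] rows i) j); split.
- move=> i; rewrite sum3 -et !PoszD !PoszXn.
  by case: (ord3P i) => [->|[->|->]]; rewrite /rows /= ?sqrrN PoszD; ring.
- move=> j; rewrite sum3 /rows PoszD; case: (ord3P j) => [->|[->|->]] /=; ring.
Qed.

Lemma vec_P (t : nat) (w w' : 'I_3 -> int) :
  (\sum_(j < 3) (w j) ^+ 2)%R = Posz t -> (\sum_(j < 3) (w' j) ^+ 2)%R = Posz t ->
  srt `|w ord0|%N `|w (lift ord0 ord0)|%N `|w (lift ord0 (lift ord0 ord0))|%N !=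
  srt `|w' ord0|%N `|w' (lift ord0 ord0)|%N `|w' (lift ord0 (lift ord0 ord0))|%N -> 2 <= P t.
Proof.
move=> n1 n2.
case E1: (srt _ _ _) => [[a b] c]; case E2: (srt _ _ _) => [[a' b'] c'] ne.
have [s1 e1] := srt_sum E1; have [s2 e2] := srt_sum E2.
apply: (P_ge2 s1 s2) => //.
  by rewrite e1; apply: norm_nat.
by rewrite e2; apply: norm_nat.
Qed.

Theorem corollary1 (t : nat) :
  inT t -> 10 ^ 6 <= t -> C 3 t = 5 -> 2 <= P t.
Proof.
move=> [t0 [t4 _]] big hC.
have [[v [hn hz]] nb3] := C5 hC.
pose sr (i : 'I_5) := srt `|v i ord0|%N `|v i (lift ord0 ord0)|%N `|v i (lift ord0 (lift ord0 ord0))|%N.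
case: (boolP [forall i, sr i == sr ord0]) => [/forallP allsame|].
  case E: (sr ord0) => [[a b] c].
  have hs : forall i, srt `|v i ord0|%N `|v i (lift ord0 ord0)|%N `|v i (lift ord0 (lift ord0 ord0))|%N = (a, b, c).
    by move=> i; rewrite -E; apply/eqP; exact: allsame i.
  have [abc eabc] := srt_sum (hs ord0).
  have et : a^2 + b^2 + c^2 = t by rewrite eabc; apply: norm_nat (hn ord0).
  have c0 : 0 < c.
    case: c abc et {E hs eabc} => [|c] // abc et.
    move: abc; rewrite leqn0 => /andP [ab /eqP b0]; subst b.
    move: ab; rewrite leqn0 => /eqP a0; subst a.
    by move: t4; rewrite -et.
  have [M1 M2 M3 M4 M5] := M_props hs hz.
  case: (PL_fun abc c0 M1 M2 M3 M4 M5) => [ec|cr].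
    by exfalso; apply: nb3; apply: (three_config ec et).
  have big' : 10 ^ 6 <= a^2 + b^2 + c^2 by rewrite et.
  have g1 := cross_gcd cr big'.
  have [p [pp po pa pb pc]] := odd_prime_of g1 et t4.
  exact: (odd_prime_P pp po abc et c0 pa pb pc).
move=> /forallPn [i ne].
exact: (vec_P (hn i) (hn ord0) ne).
Qed.
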